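(* For every formula $\varphi$ of $\mathcal L^{\bigcirc}_\square$: $\varphi$ is derivable in $\mathbf{K4C}$ if and only if $\varphi$ is valid on every finite dynamic $\mathbf{K4}$ frame.
   Context: Fix a non-empty set $\mathsf{PV}$ of propositional variables. The language $\mathcal L^{\bigcirc}_\square$ is given by $\varphi::= p\mid \varphi\wedge\varphi\mid\neg\varphi\mid\square\varphi\mid\bigcirc\varphi$ with $p\in\mathsf{PV}$; $\lozenge:=\neg\square\neg$. Axioms and rules: Taut (all propositional tautologies); K: $\square(\varphi\to\psi)\to(\square\varphi\to\square\psi)$; 4: $\square\varphi\to\square\square\varphi$; ${\rm Next}_\neg$: $\neg\bigcirc\varphi\leftrightarrow\bigcirc\neg\varphi$; ${\rm Next}_\wedge$: $\bigcirc(\varphi\wedge\psi)\leftrightarrow\bigcirc\varphi\wedge\bigcirc\psi$; C: $\bigcirc\varphi\wedge\bigcirc\square\varphi\to\square\bigcirc\varphi$; rules modus ponens, ${\rm Nec}_\square$, ${\rm Nec}_\bigcirc$. $\mathbf{K4C}$ is axiomatised by Taut, K, 4, ${\rm Next}_\neg$, ${\rm Next}_\wedge$, C, closed under MP, ${\rm Nec}_\square$, ${\rm Nec}_\bigcirc$. A dynamic Kripke frame is $\langle W,\sqsubset,f\rangle$ with $W$ non-empty, $\sqsubset$ a binary relation on $W$, and $f\colon W\to W$ weakly monotone: $w\sqsubset v$ implies $f(w)=f(v)$ or $f(w)\sqsubset f(v)$. It is a dynamic $\mathbf{K4}$ frame if $\sqsubset$ is transitive. Truth under a valuation $\nu\colon\mathsf{PV}\to\wp(W)$: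 $w\models p$ iff $w\in\nu(p)$, Boolean clauses as usual, $w\models\square\varphi$ iff $v\models\varphi$ for all $v$ with $w\sqsubset v$, $w\models\bigcirc\varphi$ iff $f(w)\models\varphi$. Valid on a frame means true at all points under all valuations. *)

(* Defs.v *)
From mathcomp Require Import all_boot.
Set Implicit Arguments.
Unset Strict Implicit.
Unset Printing Implicit Defensive.

Inductive form (PV : Type) : Type :=
| Var : PV -> form PV
| And : form PV -> form PV -> form PV
| Neg : form PV -> form PV
| Box : form PV -> form PV
| Next : form PV -> form PV.

Arguments Var {PV}. Arguments And {PV}. Arguments Neg {PV}.
Arguments Box {PV}. Arguments Next {PV}.

Section Syntax.
Variable PV : Type.
Definition Or (a b : form PV) := Neg (And (Neg a) (Neg b)).
Definition Imp (a b : form PV) := Neg (And a (Neg b)).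
Definition Iff (a b : form PV) := And (Imp a b) (Imp b a).
Definition Dia (a : form PV) := Neg (Box (Neg a)).

Fixpoint peval (h : form PV -> bool) (phi : form PV) : bool :=
  match phi with
  | Var _ => h phi
  | And a b => peval h a && peval h b
  | Neg a => ~~ peval h a
  | Box _ => h phi
  | Next _ => h phi
  end.

(* Propositional tautologies (substitution instances of classical tautologies). *)
Definition tautology (phi : form PV) : Prop := forall h, peval h phi = true.

Inductive K4C : form PV -> Prop :=
| ax_taut phi : tautology phi -> K4C phi
| ax_K phi psi : K4C (Imp (Box (Imp phi psi)) (Imp (Box phi) (Box psi)))
| ax_4 phi : K4C (Imp (Box phi) (Box (Box phi)))
| ax_next_neg phi : K4C (Iff (Neg (Next phi)) (Next (Neg phi)))
| ax_next_and phi psi : K4C (Iff (Next (And phi psi)) (And (Next phi) (Next psi)))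
| ax_C phi : K4C (Imp (And (Next phi) (Next (Box phi))) (Box (Next phi)))
| rule_mp phi psi : K4C phi -> K4C (Imp phi psi) -> K4C psi
| rule_nec_box phi : K4C phi -> K4C (Box phi)
| rule_nec_next phi : K4C phi -> K4C (Next phi).
End Syntax.

Record fin_dyn_frame := FinDynFrame {
  carrier :> finType;
  rel : carrier -> carrier -> Prop;
  point : carrier; (* W is non-empty *)
  dyn : carrier -> carrier;
  dyn_weakly_monotone : forall w v, rel w v -> dyn w = dyn v \/ rel (dyn w) (dyn v)
}.

Definition is_K4 (F : fin_dyn_frame) : Prop :=
  forall u v w : F, rel u v -> rel v w -> rel u w.

Section Semantics.
Variables (PV : Type) (F : fin_dyn_frame).

Fixpoint sat (nu : PV -> F -> Prop) (w : F) (phi : form PV) : Prop :=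
  match phi with
  | Var p => nu p w
  | And a b => sat nu w a /\ sat nu w b
  | Neg a => ~ sat nu w a
  | Box a => forall v, rel w v -> sat nu v a
  | Next a => sat nu (dyn w) a
  end.

Definition valid_on (phi : form PV) : Prop :=
  forall (nu : PV -> F -> Prop) (w : F), sat nu w phi.
End Semantics.

(* Main.v *)
Require Import Defs.
From mathcomp Require Import all_boot.
From HB Require Import structures.
From mathcomp Require Import boolp zify.
Set Implicit Arguments. Unset Strict Implicit. Unset Printing Implicit Defensive.

HB.instance Definition _ (PV : Type) := gen_eqMixin (form PV).
HB.instance Definition _ (PV : Type) := gen_choiceMixin (form PV).

Ltac ptaut := let h := fresh "h" in intro h; rewrite /Iff /Imp /Or /Dia; simpl;
  repeat match goal with
  | |- context [peval h ?x] => destruct (peval h x)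
  | |- context [h ?x] => destruct (h x)
  end; simpl; done.

Section PropK.
Variables (PV : Type) (p0 : PV).
Local Notation form := (form PV).
Implicit Types (a b c g y z : form) (l : seq form).
Definition Top : form := Imp (Var p0) (Var p0).
Definition bigconj (l : seq form) := foldr And Top l.
Fixpoint inl (y : form) (l : seq form) : Prop :=
  if l is z :: l' then z = y \/ inl y l' else False.
Definition Con (a : form) := ~ K4C (Neg a).

Lemma peval_bigconj h l : peval h (bigconj l) = all (peval h) l.
Proof. by elim: l => //= [|y l ->]; first by case: (h (Var p0)). Qed.

Lemma prop_rule (l : seq form) c :
  (forall h, all (peval h) l -> peval h c) -> (forall y, inl y l -> K4C y) -> K4C c.
Proof.
elim: l c => [|y l IH] c /= Ht Hd; first by apply: ax_taut => h; exact: Ht.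
apply: (@rule_mp _ y); first by apply: Hd; left.
apply: IH => [h Hl|z Hz]; last by apply: Hd; right.
have := Ht h; rewrite Hl andbT /=.
by case: (peval h y); case: (peval h c) => //= ->.
Qed.

Lemma imp_trans a b c : K4C (Imp a b) -> K4C (Imp b c) -> K4C (Imp a c).
Proof. move=> H1 H2; apply: (@prop_rule [:: Imp a b; Imp b c]); first ptaut.
by move=> y [<-|[<-|[]]]. Qed.

Lemma imp_refl a : K4C (Imp a a).
Proof. apply: (@prop_rule [::]); first ptaut. by []. Qed.

Lemma conj_elim l y : y \in l -> K4C (Imp (bigconj l) y).
Proof.
move=> yl; apply: ax_taut => h /=; rewrite peval_bigconj.
by case E: (all _ _) => //=; move/allP: E => /(_ y yl) ->.
Qed.

Lemma conj_intro a l : (forall y, y \in l -> K4C (Imp a y)) -> K4C (Imp a (bigconj l)).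
Proof.
elim: l => [|y l IH] H /=.
  apply: (@prop_rule [::]) => //; ptaut.
have H1 := H y (mem_head _ _).
have H2 : K4C (Imp a (bigconj l)) by apply: IH => z zl; apply: H; rewrite inE zl orbT.
apply: (@prop_rule [:: Imp a y; Imp a (bigconj l)]); first ptaut.
by move=> z [<-|[<-|[]]].
Qed.

Lemma box_mono a b : K4C (Imp a b) -> K4C (Imp (Box a) (Box b)).
Proof. move=> H; apply: (rule_mp (rule_nec_box H)); exact: ax_K. Qed.

Lemma box_and a b : K4C (Imp (And (Box a) (Box b)) (Box (And a b))).
Proof.
have H1 : K4C (Imp a (Imp b (And a b))) by apply: (@prop_rule [::]) => //; ptaut.
have H2 := box_mono H1.
have H3 := @ax_K _ b (And a b).
apply: (@prop_rule [:: Imp (Box a) (Box (Imp b (And a b)));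
  Imp (Box (Imp b (And a b))) (Imp (Box b) (Box (And a b)))]); first ptaut.
by move=> z [<-|[<-|[]]].
Qed.

Lemma top_der : K4C Top.
Proof. apply: (@prop_rule [::]) => //; ptaut. Qed.

Lemma box_conj a l : (forall y, y \in l -> K4C (Imp a (Box y))) -> K4C (Imp a (Box (bigconj l))).
Proof.
elim: l => [|y l IH] H /=.
  have H1 := rule_nec_box top_der.
  apply: (@prop_rule [:: Box Top]); first ptaut. by move=> z [<-|[]].
have H1 := H y (mem_head _ _).
have H2 : K4C (Imp a (Box (bigconj l))) by apply: IH => z zl; apply: H; rewrite inE zl orbT.
have H3 := box_and y (bigconj l).
apply: (@prop_rule [:: Imp a (Box y); Imp a (Box (bigconj l)); Imp (And (Box y) (Box (bigconj l))) (Box (And y (bigconj l)))]); first ptaut.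
by move=> z [<-|[<-|[<-|[]]]].
Qed.

Lemma next_mono a b : K4C (Imp a b) -> K4C (Imp (Next a) (Next b)).
Proof.
move=> H; have H1 := rule_nec_next H.
have H2 := ax_next_neg (And a (Neg b)).
have H3 := ax_next_and a (Neg b).
have H4 := ax_next_neg b.
apply: (@prop_rule [:: Next (Imp a b); Iff (Neg (Next (And a (Neg b)))) (Next (Neg (And a (Neg b))));
  Iff (Next (And a (Neg b))) (And (Next a) (Next (Neg b))); Iff (Neg (Next b)) (Next (Neg b))]); first ptaut.
by move=> z [<-|[<-|[<-|[<-|[]]]]].
Qed.

Lemma next_and a b : K4C (Imp (And (Next a) (Next b)) (Next (And a b))).
Proof.
have H := ax_next_and a b.
apply: (@prop_rule [:: Iff (Next (And a b)) (And (Next a) (Next b))]); first ptaut.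
by move=> z [<-|[]].
Qed.

Lemma next_and' a b : K4C (Imp (Next (And a b)) (And (Next a) (Next b))).
Proof.
have H := ax_next_and a b.
apply: (@prop_rule [:: Iff (Next (And a b)) (And (Next a) (Next b))]); first ptaut.
by move=> z [<-|[]].
Qed.

Lemma next_neg a : K4C (Imp (Neg (Next a)) (Next (Neg a))).
Proof.
have H := ax_next_neg a.
apply: (@prop_rule [:: Iff (Neg (Next a)) (Next (Neg a))]); first ptaut.
by move=> z [<-|[]].
Qed.

Lemma next_neg' a : K4C (Imp (Next (Neg a)) (Neg (Next a))).
Proof.
have H := ax_next_neg a.
apply: (@prop_rule [:: Iff (Neg (Next a)) (Next (Neg a))]); first ptaut.
by move=> z [<-|[]].
Qed.

Lemma next_conj a l : (forall y, y \in l -> K4C (Imp a (Next y))) -> K4C (Imp a (Next (bigconj l))).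
Proof.
elim: l => [|y l IH] H /=.
  have H1 := rule_nec_next top_der.
  apply: (@prop_rule [:: Next Top]); first ptaut. by move=> z [<-|[]].
have H1 := H y (mem_head _ _).
have H2 : K4C (Imp a (Next (bigconj l))) by apply: IH => z zl; apply: H; rewrite inE zl orbT.
have H3 := next_and y (bigconj l).
apply: (@prop_rule [:: Imp a (Next y); Imp a (Next (bigconj l)); Imp (And (Next y) (Next (bigconj l))) (Next (And y (bigconj l)))]); first ptaut.
by move=> z [<-|[<-|[<-|[]]]].
Qed.

Lemma con_weak a b : K4C (Imp a b) -> Con a -> Con b.
Proof.
move=> H Ca Nb; apply: Ca.
apply: (@prop_rule [:: Imp a b; Neg b]); first ptaut.
by move=> z [<-|[<-|[]]].
Qed.

Lemma con_bad a b : Con a -> K4C (Imp a b) -> K4C (Imp a (Neg b)) -> False.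
Proof.
move=> Ca H1 H2; apply: Ca.
apply: (@prop_rule [:: Imp a b; Imp a (Neg b)]); first ptaut.
by move=> z [<-|[<-|[]]].
Qed.

Lemma con_next a b : Con (And (Next a) (Next b)) -> Con (And a b).
Proof.
move=> C N; apply: C.
have H1 := rule_nec_next N.
have H2 := next_neg' (And a b).
have H3 := next_and' a b.
apply: (@prop_rule [:: Next (Neg (And a b)); Imp (Next (Neg (And a b))) (Neg (Next (And a b)));
   Imp (Next (And a b)) (And (Next a) (Next b)); Imp (And (Next a) (Next b)) (Next (And a b))]); first ptaut.
by move=> z [<-|[<-|[<-|[<-|[]]]]] //; exact: next_and.
Qed.

Lemma con_box g a : Con (And (Box g) (Neg (Box a))) -> Con (And g (Neg a)).
Proof. move=> C N; apply: C; exact: (box_mono N). Qed.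

Lemma con_or a b c : Con (And (Or a b) c) -> Con (And a c) \/ Con (And b c).
Proof.
move=> C; apply: contrapT => /not_orP [/contrapT H1 /contrapT H2]; apply: C.
apply: (@prop_rule [:: Neg (And a c); Neg (And b c)]); first ptaut.
by move=> z [<-|[<-|[]]].
Qed.

Lemma con_neg a : ~ K4C a -> Con (Neg a).
Proof.
move=> Na N; apply: Na.
apply: (@prop_rule [:: Neg (Neg a)]); first ptaut.
by move=> z [<-|[]].
Qed.

Lemma con_split a b : Con a -> Con (And a b) \/ Con (And a (Neg b)).
Proof.
move=> C; apply: contrapT => /not_orP [/contrapT H1 /contrapT H2]; apply: C.
apply: (@prop_rule [:: Neg (And a b); Neg (And a (Neg b))]); first ptaut.
by move=> z [<-|[<-|[]]].
Qed.

Lemma box_comb t a b : K4C (Imp t (Box a)) -> K4C (Imp t (Box b)) -> K4C (Imp t (Box (And a b))).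
Proof.
move=> H1 H2; have H3 := box_and a b.
apply: (@prop_rule [:: Imp t (Box a); Imp t (Box b); Imp (And (Box a) (Box b)) (Box (And a b))]); first ptaut.
by move=> z [<-|[<-|[<-|[]]]].
Qed.

End PropK.

Fixpoint fsize PV (a : form PV) : nat :=
  match a with Var _ => 1 | And x y => (fsize x + fsize y).+1
  | Neg x => (fsize x).+1 | Box x => (fsize x).+1 | Next x => (fsize x).+1 end.

Lemma fsize_iter PV k (a : form PV) : k < fsize (iter k Next a).
Proof. elim: k => [|k IH] /=; first by case: a. by []. Qed.

Lemma fsize_L PV (L : seq (form PV)) a : a \in L -> fsize a <= sumn [seq fsize b | b <- L].
Proof.
elim: L => [//|b L IH]; rewrite inE => /orP [/eqP ->|/IH H] /=; first exact: leq_addr.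
exact: leq_trans H (leq_addl _ _).
Qed.

Definition subs PV (a : form PV) : seq (form PV) :=
  match a with And x y => [:: x; y] | Neg x => [:: x] | Box x => [:: x] | _ => [::] end.

Section Canon.
Variables (PV : Type) (p0 : PV) (L : seq (form PV)).
Hypothesis HP1 : forall a, Next a \in L -> a \in L.
Hypothesis HP2 : forall k a b, b \in subs a -> iter k Next a \in L -> iter k Next b \in L.

Local Notation form := (form PV).
Local Notation S := (seq_sub L).
Local Notation P := ({set S} * {set S})%type.
Implicit Types (a b c g : form) (D : {set S}) (x y z : P).

Definition memD D a : Prop := exists2 w, w \in D & val w = a.
Definition fD D : {set S} := [set w | [exists u in D, val u == Next (val w)]].
Definition fP x : P := (fD x.1, fD x.2).
Definition closedD D := forall k a b, b \in subs a -> memD D (iter k Next a) -> memD D (iter k Next b).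
Definition lit x (w : S) := if w \in x.2 then val w else Neg (val w).
Definition tP x := bigconj p0 [seq lit x w | w <- enum x.1].
Definition valid x := [/\ x.2 \subset x.1, closedD x.1 & Con (tP x)].
Definition memV x a := memD x.2 a.
Definition Kr x y := x.1 = y.1 /\ forall a, memV x (Box a) -> memV y a /\ memV y (Box a).
Inductive R : P -> P -> Prop :=
| R_eq x y : valid x -> valid y -> Kr x y -> fP x = fP y -> R x y
| R_step x y : valid x -> valid y -> Kr x y -> R (fP x) (fP y) -> R x y.

Lemma memD_in D (w : S) : memD D (val w) -> w \in D.
Proof. by case=> u uD /val_inj <-. Qed.

Lemma memD_val D (w : S) : w \in D -> memD D (val w).
Proof. by move=> wD; exists w. Qed.

Lemma memD_fD D a : memD (fD D) a <-> memD D (Next a).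
Proof.
split.
  case=> w; rewrite inE => /existsP [u /andP [uD /eqP E]] <-; by exists u.
case=> u uD E.
have aL : a \in L by apply: HP1; rewrite -E; exact: (valP u).
exists (Sub a aL : S); last by rewrite SubK.
rewrite inE; apply/existsP; exists u; by rewrite uD SubK E eqxx.
Qed.

Lemma memD_iter k D a : memD (iter k fD D) a -> memD D (iter k Next a).
Proof.
elim: k a => [//|k IH] a /= /memD_fD /IH; by rewrite -iterSr.
Qed.

Lemma closed_fD D : closedD D -> closedD (fD D).
Proof.
move=> cD k a b ba /memD_fD; rewrite -iterS => H; apply/memD_fD; rewrite -iterS.
exact: cD ba H.
Qed.

Lemma memD_sub D D' a : D \subset D' -> memD D a -> memD D' a.
Proof. by move=> /subsetP sub [w wD <-]; exists w => //; apply: sub. Qed.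

Lemma decide x a : valid x -> memD x.1 a ->
  (memV x a /\ K4C (Imp (tP x) a)) \/ (~ memV x a /\ K4C (Imp (tP x) (Neg a))).
Proof.
move=> [sx cx Cx] [w wD <-].
have wl : w \in enum x.1 by rewrite mem_enum.
have H := @conj_elim _ p0 _ _ (map_f (lit x) wl).
rewrite /lit in H; case E: (w \in x.2) in H.
  by left; split => //; exists w.
right; split => // /memD_in; by rewrite E.
Qed.

Lemma memV_der x a : valid x -> memD x.1 a -> (memV x a <-> K4C (Imp (tP x) a)).
Proof.
move=> vx Da; case: (decide vx Da) => [[H1 H2] | [H1 H2]]; first by split.
split => // H; exfalso; case: vx => _ _ C; exact: con_bad C H H2.
Qed.

Lemma memV_D x a : valid x -> memV x a -> memD x.1 a.
Proof. case=> s _ _; exact: memD_sub. Qed.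

Lemma t_next x : valid x -> K4C (Imp (tP x) (Next (tP (fP x)))).
Proof.
move=> vx; apply: next_conj => y0 /mapP [w]; rewrite mem_enum => wD ->.
have [u uD E] : memD x.1 (Next (val w)) by apply/memD_fD; exact: memD_val.
rewrite /lit /=.
case: (decide vx (ex_intro2 _ _ u uD E)) => [[H1 H2]|[H1 H2]].
  suff -> : w \in fD x.2 by [].
  by apply: memD_in; apply/memD_fD.
have -> : (w \in fD x.2) = false.
  by apply/negP => /memD_val /memD_fD.
exact: imp_trans H2 (next_neg _).
Qed.

Lemma valid_f x : valid x -> valid (fP x).
Proof.
move=> vx; case: (vx) => sx cx Cx; split => /=.
- apply/subsetP => w; rewrite !inE => /existsP [u /andP [uD E]].
  apply/existsP; exists u; by rewrite E (subsetP sx).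
- exact: closed_fD.
- move=> N; apply: Cx.
  have H1 := t_next vx.
  have H2 := rule_nec_next N.
  have H3 := next_neg' (tP (fP x)).
  apply: (@prop_rule _ [:: Imp (tP x) (Next (tP (fP x))); Next (Neg (tP (fP x)));
     Imp (Next (Neg (tP (fP x)))) (Neg (Next (tP (fP x))))]); first ptaut.
  by move=> z [<-|[<-|[<-|[]]]].
Qed.

Lemma R_valid x y : R x y -> valid x /\ valid y.
Proof. by case. Qed.

Lemma Kr_trans x y z : Kr x y -> Kr y z -> Kr x z.
Proof.
move=> [e1 H1] [e2 H2]; split; first by rewrite e1.
move=> a /H1 [_ /H2] //.
Qed.

Lemma R_Kr x y : R x y -> Kr x y.
Proof. by case. Qed.

Lemma R_cases x y : R x y -> [/\ valid x, valid y, Kr x y & (fP x = fP y \/ R (fP x) (fP y))].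
Proof. by case=> *; split => //; [left|right]. Qed.

Lemma R_intro x y : valid x -> valid y -> Kr x y -> (fP x = fP y \/ R (fP x) (fP y)) -> R x y.
Proof. by move=> vx vy k [H|H]; [apply: R_eq | apply: R_step]. Qed.

Lemma R_trans x y z : R x y -> R y z -> R x z.
Proof.
move=> H; elim: H z => {x y}.
- move=> x y vx vy kxy fxy z /R_cases [_ vz kyz H].
  apply: R_intro => //; first exact: Kr_trans kxy kyz.
  by rewrite fxy.
- move=> x y vx vy kxy Rf IH z /R_cases [_ vz kyz [H|H]];
  (apply: R_intro => //; first exact: Kr_trans kxy kyz); right.
    by rewrite -H.
  exact: IH.
Qed.

Lemma R_wm x y : R x y -> fP x = fP y \/ R (fP x) (fP y).
Proof. by case=> *; [left|right]. Qed.

Definition Fr : fin_dyn_frame := @FinDynFrame P R (set0, set0) fP R_wm.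

Lemma Fr_K4 : is_K4 Fr.
Proof. move=> u v w; exact: R_trans. Qed.


Definition Nb := sumn [seq fsize b | b <- L].

Lemma iter_empty D : iter Nb.+1 fD D = set0.
Proof.
apply/setP => w; rewrite [in RHS]inE; apply/negbTE/negP => /memD_val /memD_iter [u _ E].
have h1 := fsize_iter Nb.+1 (val w); rewrite -E in h1.
have h2 := fsize_L (valP u).
by have := leq_trans h1 h2; rewrite /Nb; lia.
Qed.

Lemma linden_seq (D : {set S}) (s : seq S) c : uniq s -> Con c ->
  exists V : {set S}, V \subset [set w | w \in s] /\
     Con (And c (bigconj p0 [seq lit (D, V) w | w <- s])).
Proof.
elim: s c => [|w s IH] c /=.
  move=> _ C; exists set0; split; first exact: sub0set.
  apply: con_weak C; apply: (@prop_rule _ [:: Top p0]); first ptaut.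
  by move=> z [<-|[]]; exact: top_der.
move=> /andP [ws us] C.
case: (con_split (val w) C) => C'.
  have [V [sV CV]] := IH _ us C'.
  exists (w |: V); split.
    apply/subsetP => u; rewrite !inE => /orP [->//|/(subsetP sV)]; rewrite inE => ->; by rewrite orbT.
  have -> : [seq lit (D, w |: V) u | u <- s] = [seq lit (D, V) u | u <- s].
    apply/eq_in_map => u us'; rewrite /lit /= inE.
    have uw : (u == w) = false by apply/negP => /eqP E; move: ws; rewrite -E us'.
    by rewrite inE uw.
  have -> : lit (D, w |: V) w = val w by rewrite /lit /= setU11.
  apply: con_weak CV.
  apply: (@prop_rule _ [::]) => //; ptaut.
have [V [sV CV]] := IH _ us C'.
exists V; split.
  apply/subsetP => u /(subsetP sV); rewrite !inE => ->; by rewrite orbT.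
have -> : lit (D, V) w = Neg (val w).
  rewrite /lit /=; have -> // : (w \in V) = false.
  by apply/negP => /(subsetP sV); rewrite inE (negbTE ws).
apply: con_weak CV.
apply: (@prop_rule _ [::]) => //; ptaut.
Qed.

Lemma linden D c : Con c -> exists V : {set S}, V \subset D /\ Con (And c (tP (D, V))).
Proof.
move=> C; have [V [sV CV]] := linden_seq D (enum_uniq (mem D)) C.
exists V; split => //.
apply/subsetP => u /(subsetP sV); by rewrite inE mem_enum.
Qed.

Definition unbox a := match a with Box x => x | _ => a end.
Definition isBox a := match a with Box _ => true | _ => false end.
Definition Bx x := bigconj p0 [seq And (unbox (val w)) (val w) | w <- enum x.2 & isBox (val w)].

Lemma B_box x a : memV x (Box a) -> K4C (Imp (Bx x) (And a (Box a))).
Proof.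
case=> w wV E; apply: conj_elim.
have -> : And a (Box a) = And (unbox (val w)) (val w) by rewrite E.
by apply: map_f; rewrite mem_filter E mem_enum wV.
Qed.

Lemma t_B x : valid x -> K4C (Imp (tP x) (Box (Bx x))).
Proof.
move=> vx; apply: box_conj => y0 /mapP [w]; rewrite mem_filter mem_enum => /andP [bw wV] ->.
case E: (val w) bw => [||| a |] // _ /=.
have mV : memV x (Box a) by exists w.
have H1 := (memV_der vx (memV_D vx mV)).1 mV.
have H2 := ax_4 a; have H3 := box_and a (Box a).
apply: (@prop_rule _ [:: Imp (tP x) (Box a); Imp (Box a) (Box (Box a));
   Imp (And (Box a) (Box (Box a))) (Box (And a (Box a)))]); first ptaut.
by move=> z [<-|[<-|[<-|[]]]].
Qed.

Fixpoint E n x : form :=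
  if n is n'.+1 then Or (tP x) (And (Bx x) (Next (E n' (fP x)))) else Top p0.

Lemma A2 n x : valid x -> K4C (Imp (tP x) (Box (Next (E n (fP x))))).
Proof.
elim: n x => [|n IH] x vx /=.
  have H := rule_nec_box (rule_nec_next (top_der p0)).
  apply: (@prop_rule _ [:: Box (Next (Top p0))]); first ptaut.
  by move=> z [<-|[]].
set y := fP x; have vy : valid y := valid_f vx.
set G := And (Bx y) (Next (E n (fP y))).
have H1 : K4C (Imp (tP y) (Box G)) := box_comb (t_B vy) (IH y vy).
have H2 : K4C (Imp G (Or (tP y) G)) by apply: (@prop_rule _ [::]) => //; ptaut.
have H3 := box_mono H2.
have H4 : K4C (Imp (tP y) (And (Or (tP y) G) (Box (Or (tP y) G)))).
  apply: (@prop_rule _ [:: Imp (tP y) (Box G); Imp (Box G) (Box (Or (tP y) G))]); first ptaut.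
  by move=> z [<-|[<-|[]]].
have H5 := next_mono H4.
have H6 := next_and' (Or (tP y) G) (Box (Or (tP y) G)).
have H7 := ax_C (Or (tP y) G).
have H8 := t_next vx.
exact: imp_trans H8 (imp_trans H5 (imp_trans H6 H7)).
Qed.

Lemma A n x : valid x -> K4C (Imp (tP x) (Box (And (Bx x) (Next (E n (fP x)))))).
Proof. move=> vx; exact: box_comb (t_B vx) (A2 n vx). Qed.

Definition LB n := forall x z, valid x -> valid z -> z.1 = x.1 -> iter n fD x.1 = set0 ->
  Con (And (E n x) (tP z)) -> z = x \/ R x z.

Lemma stepR n : LB n -> forall x z, valid x -> valid z -> z.1 = x.1 -> iter n.+1 fD x.1 = set0 ->
  Con (And (And (Bx x) (Next (E n (fP x)))) (tP z)) -> R x z.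
Proof.
move=> IH x z vx vz e1 en C.
apply: R_intro => //.
  split; first by rewrite e1.
  move=> a mV.
  have Db : memD z.1 (Box a) by rewrite e1; exact: memV_D vx mV.
  have Da : memD z.1 a.
    by case: vz => _ cz _; apply: (cz 0 (Box a)) => //; rewrite inE.
  have HB := B_box mV.
  have key : forall b, memD z.1 b -> K4C (Imp (Bx x) b) -> memV z b.
    move=> b Db' Hb; case: (decide vz Db') => [[]//|[_ Hn]]; exfalso.
    apply: C.
    apply: (@prop_rule _ [:: Imp (Bx x) b; Imp (tP z) (Neg b)]); first ptaut.
    by move=> w [<-|[<-|[]]].
  split; apply: key => //.
    apply: imp_trans HB _; apply: (@prop_rule _ [::]) => //; ptaut.
  apply: imp_trans HB _; apply: (@prop_rule _ [::]) => //; ptaut.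
have Cn : Con (And (Next (E n (fP x))) (Next (tP (fP z)))).
  apply: con_weak C; have H := t_next vz.
  apply: (@prop_rule _ [:: Imp (tP z) (Next (tP (fP z)))]); first ptaut.
  by move=> w [<-|[]].
have C' := con_next Cn.
case: (IH (fP x) (fP z) (valid_f vx) (valid_f vz)) => //.
- by rewrite /= e1.
- by rewrite /= -iterSr.
- by move=> ->; left.
- by right.
Qed.

Lemma lemB n : LB n.
Proof.
elim: n => [|n IH] x z vx vz e1 en C.
  left; move: en => /= en.
  case: vx vz => sx _ _ [sz _ _].
  rewrite en in sx; rewrite e1 en in sz.
  move: sx sz; rewrite !subset0 => /eqP ex /eqP ez.
  by rewrite [x]surjective_pairing [z]surjective_pairing e1 en ex ez.
case: (con_or C) => C'.
  left.
  rewrite [x]surjective_pairing [z]surjective_pairing e1; congr pair.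
  apply/setP => w.
  case: (boolP (w \in x.1)) => wD; last first.
    case: vx vz => sx _ _ [sz _ _].
    apply/idP/idP => H; exfalso; move: wD; rewrite ?(subsetP sx _ H) //.
    by rewrite -e1 (subsetP sz _ H).
  have Dx : memD x.1 (val w) by exists w.
  have Dz : memD z.1 (val w) by rewrite e1.
  have bad : forall u v, valid u -> valid v -> memD u.1 (val w) -> memD v.1 (val w) ->
      Con (And (tP v) (tP u)) -> w \in u.2 -> w \in v.2.
    move=> u v vu vv Du Dv Cuv wu.
    case: (decide vv Dv) => [[/memD_in //]|[_ Hn]]; exfalso.
    have Hu := (memV_der vu Du).1 (memD_val wu).
    apply: Cuv.
    apply: (@prop_rule _ [:: Imp (tP u) (val w); Imp (tP v) (Neg (val w))]); first ptaut.
    by move=> y0 [<-|[<-|[]]].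
  apply/idP/idP; first exact: (bad z x vz vx Dz Dx C').
  apply: (bad x z vx vz Dx Dz); apply: con_weak C'; apply: (@prop_rule _ [::]) => //; ptaut.
right; apply: (stepR IH) => //.
Qed.

Definition nuF (p : PV) (x : Fr) : Prop := memV x (Var p).

Lemma closed_sub x a b : valid x -> b \in subs a -> memD x.1 a -> memD x.1 b.
Proof. by case=> _ cx _ ba Da; apply: (cx 0 a). Qed.

Lemma truth a : forall x : P, valid x -> memD x.1 a -> (@sat PV Fr nuF x a <-> memV x a).
Proof.
elim: a => [p|a IHa b IHb|a IHa|a IHa|a IHa] x vx Dx /=.
- by [].
- have Da := closed_sub vx (a:=And a b) (b:=a) ltac:(by rewrite inE eqxx) Dx.
  have Db := closed_sub vx (a:=And a b) (b:=b) ltac:(by rewrite !inE eqxx orbT) Dx.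
  rewrite IHa // IHb // !memV_der //.
  split.
    move=> [H1 H2]; apply: (@prop_rule _ [:: Imp (tP x) a; Imp (tP x) b]); first ptaut.
    by move=> w [<-|[<-|[]]].
  move=> H; split; apply: (@prop_rule _ [:: Imp (tP x) (And a b)]) => //; try ptaut;
    by move=> w [<-|[]].
- have Da := closed_sub vx (a:=Neg a) (b:=a) ltac:(by rewrite inE eqxx) Dx.
  rewrite IHa //.
  case: (decide vx Da) => [[H1 H2]|[H1 H2]].
    split => // H; exfalso; case: (vx) => _ _ Cx; apply: (con_bad Cx H2).
    by apply: (memV_der vx Dx).1.
  split => // _; apply/(memV_der vx Dx) => //.
- have Da := closed_sub vx (a:=Box a) (b:=a) ltac:(by rewrite inE eqxx) Dx.
  split; last first.
    move=> mV y /R_cases [_ vy [e1 kk] _].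
    have [my _] := kk a mV.
    by apply/(IHa y vy) => //; rewrite -e1.
  move=> Hs; apply: contrapT => nm.
  have Hn : K4C (Imp (tP x) (Neg (Box a))).
    by case: (decide vx Dx) => [[]|[]].
  have HA := A Nb vx.
  set G := And (Bx x) (Next (E Nb (fP x))) in HA.
  have C1 : Con (And (Box G) (Neg (Box a))).
    case: vx => _ _ Cx; apply: con_weak Cx.
    apply: (@prop_rule _ [:: Imp (tP x) (Box G); Imp (tP x) (Neg (Box a))]); first ptaut.
    by move=> w [<-|[<-|[]]].
  have C2 := con_box C1.
  have [V [sV CV]] := linden x.1 C2.
  have vz : valid (x.1, V).
    split => //; first by case: vx.
    apply: con_weak CV; apply: (@prop_rule _ [::]) => //; ptaut.
  have Rxz : R x (x.1, V).
    apply: (stepR (@lemB Nb)) => //; first exact: iter_empty.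
    apply: con_weak CV; apply: (@prop_rule _ [::]) => //; ptaut.
  have := Hs _ Rxz; rewrite IHa //.
  move/(memV_der vz Da) => Ha; case: vz => _ _ Cz.
  apply: (con_bad CV (b:=a)).
    apply: (@prop_rule _ [:: Imp (tP (x.1, V)) a]); first ptaut.
    by move=> w [<-|[]].
  apply: (@prop_rule _ [::]) => //; ptaut.
- have Da : memD (fP x).1 a by apply/memD_fD.
  rewrite IHa //; last exact: valid_f.
  exact: memD_fD.
Qed.

Lemma completeness_L a : a \in L -> ~ K4C a -> ~ valid_on Fr a.
Proof.
move=> aL na Hv.
have [V [_ CV]] := linden setT (con_neg na).
have cT : closedD setT.
  move=> k b c cb [w _ Ew].
  have cL : iter k Next c \in L by apply: (HP2 cb); rewrite -Ew; exact: (valP w).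
  by exists (Sub (iter k Next c) cL : S); rewrite ?inE ?SubK.
have vx : valid (setT, V).
  split => //; first exact: subsetT.
  apply: con_weak CV; apply: (@prop_rule _ [::]) => //; ptaut.
have Dx : memD setT a by exists (Sub a aL : S); rewrite ?inE ?SubK.
have := Hv nuF (setT, V); rewrite truth // => /(memV_der vx Dx) H.
apply: (con_bad CV (b:=a)).
  apply: imp_trans H; apply: (@prop_rule _ [::]) => //; ptaut.
apply: (@prop_rule _ [::]) => //; ptaut.
Qed.

End Canon.

Fixpoint clf PV (a : form PV) : seq (form PV) :=
  match a with
  | Var _ => [:: a]
  | And x y => a :: clf x ++ clf y
  | Neg x => a :: clf x
  | Box x => a :: clf x
  | Next x => a :: clf x ++ map Next (clf x)
  end.

Lemma clf_self PV (a : form PV) : a \in clf a.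
Proof. by case: a => *; rewrite inE eqxx. Qed.

Lemma clf_P1 PV (phi : form PV) : forall a, Next a \in clf phi -> a \in clf phi.
Proof.
elim: phi => [p|x IHx y IHy|x IHx|x IHx|x IHx] a /= H.
- by move: H; rewrite inE => /eqP E; discriminate.
- move: H; rewrite inE mem_cat => /orP [/eqP E|/orP [H|H]]; first discriminate.
    by rewrite inE mem_cat IHx ?orbT.
  by rewrite inE mem_cat IHy ?orbT.
- move: H; rewrite inE => /orP [/eqP E|H]; first discriminate.
  by rewrite inE IHx ?orbT.
- move: H; rewrite inE => /orP [/eqP E|H]; first discriminate.
  by rewrite inE IHx ?orbT.
- move: H; rewrite inE mem_cat => /orP [/eqP [->]|/orP [H|H]].
    by rewrite inE mem_cat clf_self orbT.
  by rewrite inE mem_cat IHx ?orbT.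
  by case/mapP: H => y yin [->]; rewrite inE mem_cat yin orbT.
Qed.

Lemma clf_P2 PV (phi : form PV) :
  forall k a b, b \in subs a -> iter k Next a \in clf phi -> iter k Next b \in clf phi.
Proof.
elim: phi => [p|x IHx y IHy|x IHx|x IHx|x IHx] k a b ba /= H.
- move: H; rewrite inE => /eqP E.
  by case: k E => [|k] /= E; [move: ba; rewrite E | discriminate].
- move: H; rewrite inE mem_cat => /orP [/eqP E|/orP [H|H]].
  + case: k E => [|k] /= E; last discriminate.
    move: ba; rewrite E !inE => /orP [] /eqP ->;
    by rewrite mem_cat clf_self ?orbT.
  + by rewrite inE mem_cat (IHx k a) ?orbT.
  + by rewrite inE mem_cat (IHy k a) ?orbT.
- move: H; rewrite inE => /orP [/eqP E|H].
  + case: k E => [|k] /= E; last discriminate.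
    by move: ba; rewrite E !inE => /eqP ->; rewrite clf_self orbT.
  + by rewrite inE (IHx k a) ?orbT.
- move: H; rewrite inE => /orP [/eqP E|H].
  + case: k E => [|k] /= E; last discriminate.
    by move: ba; rewrite E !inE => /eqP ->; rewrite clf_self orbT.
  + by rewrite inE (IHx k a) ?orbT.
- move: H; rewrite inE mem_cat => /orP [/eqP E|/orP [H|H]].
  + case: k E => [|k] /= E; first by move: ba; rewrite E.
    case: E => E.
    by rewrite inE mem_cat (map_f Next (IHx k a b ba _)) ?E ?clf_self ?orbT.
  + by rewrite inE mem_cat (IHx k a) ?orbT.
  + case/mapP: H => y yin E.
    case: k E => [|k] /= E; first by move: ba; rewrite E.
    case: E => E.
    by rewrite inE mem_cat (map_f Next (IHx k a b ba _)) ?E ?orbT.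
Qed.

Section Soundness.
Variables (PV : Type) (F : fin_dyn_frame) (HK : is_K4 F) (nu : PV -> F -> Prop).

Lemma peval_sat (w : F) (a : form PV) :
  peval (fun b => `[< sat nu w b >]) a = `[< sat nu w a >].
Proof.
elim: a => //= [a IHa b IHb | a IHa]; first by rewrite IHa IHb asbool_and.
by rewrite IHa asbool_neg.
Qed.

Lemma sound (a : form PV) : K4C a -> forall w : F, sat nu w a.
Proof.
elim => {a} /=.
- move=> a Ht w; apply/asboolP; rewrite -peval_sat; exact: Ht.
- move=> a b w [H1 H2]; apply: H2 => -[H3 H4]; apply: H4 => v wv.
  apply: contrapT => nb; exact: (H1 v wv (conj (H3 v wv) nb)).
- move=> a w [H1 H2]; apply: H2 => v wv u vu; exact: H1 u (HK wv vu).
- move=> a w /=; tauto.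
- move=> a b w /=; tauto.
- move=> a w [[H1 H2] H3]; apply: H3 => v wv.
  case: (dyn_weakly_monotone wv) => [<- // | ]; exact: H2.
- move=> a b _ IHa _ IHb w; apply: contrapT => nb; apply: (IHb w); split => //; exact: IHa.
- move=> a _ IH w v _; exact: IH.
- move=> a _ IH w; exact: IH.
Qed.
End Soundness.

Theorem mainTheorem4 (PV : Type) (p0 : PV) (phi : form PV) :
  K4C phi <-> (forall F : fin_dyn_frame, is_K4 F -> valid_on F phi).
Proof.
split.
  move=> H F HK nu w; exact: (sound HK nu H w).
move=> H; apply: contrapT => nd.
apply: (@completeness_L _ p0 _ (@clf_P1 _ phi) (@clf_P2 _ phi) _ (clf_self phi) nd).
apply: H; exact: Fr_K4.
Qed.
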